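(* Let $n\ge2$ and $|\psi\rangle_{ABS}\in\mathbb{C}^2\otimes\mathbb{C}^2\otimes\mathbb{C}^n$ be a normalized pure state belonging to the class $\mathcal{A}$ defined below. Let $\mathcal{P}_m$ be the maximum probability of obtaining a two-qubit maximally entangled (Bell) state shared by Alice and Bob by a protocol in which Sapna first performs a generalized measurement and communicates the outcome to Alice and Bob, who then perform LOCC between themselves; equivalently $\mathcal{P}_m=\max\sum_i p_i E_2(|\psi_i\rangle)$ over all pure-state decompositions $\rho_{AB}=\mathrm{Tr}_S|\psi\rangle\langle\psi|=\sum_i p_i|\psi_i\rangle\langle\psi_i|$. Then $$\mathcal{P}_m=\min\{E_{A(BS)},E_{B(AS)}\}.$$
   Context: For a normalized two-qubit pure state $|\phi\rangle$, $E_2(|\phi\rangle)=2\lambda_{\min}(\phi)$ where $\lambda_{\min}$ is the smaller of its two Schmidt coefficients (squared Schmidt numbers summing to 1, possibly zero). Write $\rho_A=\mathrm{Tr}_{BS}|\psi\rangle\langle\psi|$ with eigenvalues $p_0\ge p_1$ and $\rho_B=\mathrm{Tr}_{AS}|\psi\rangle\langle\psi|$ with eigenvalues $q_0\ge q_1$; set $E_{A(BS)}=2p_1$ and $E_{B(AS)}=2q_1$. For orthonormal bases $\{|i\rangle_A\}$, $\{|j\rangle_B\}$, $\{|l\rangle_S\}_{l=1}^n$, let $A^l$ be the $2\times2$ matrix with entries $(A^l)_{ij}={}_A\langle i|{}_B\langle j|{}_S\langle l|\psi\rangle$. The state belongs to class $\mathcal{A}$ if either (i) $E_{A(BS)}\ge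 E_{B(AS)}$ and there exist orthonormal bases for which $A^{l\dagger}A^l=\mathrm{diag}(q_0^l,q_1^l)$ for all $l$ with $q_0^l\ge q_1^l$ for all $l$, where $\sum_l q_0^l=q_0$ and $\sum_l q_1^l=q_1$; or (i') $E_{A(BS)}\le E_{B(AS)}$ and there exist orthonormal bases for which $A^lA^{l\dagger}=\mathrm{diag}(p_0^l,p_1^l)$ for all $l$ with $p_0^l\ge p_1^l$ for all $l$, where $\sum_l p_0^l=p_0$ and $\sum_l p_1^l=p_1$. *)

(* Defs.v *)
(* amplitudes in C := R[i] (complex numbers over an arbitrary
   real closed field R, e.g. the real numbers); R[i] is a numClosedFieldType
   with conjugation x^* and partial order <= (x <= y iff y - x is real >= 0). *)
From HB Require Import structures.
From mathcomp Require Import all_boot all_order all_algebra all_field.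
From mathcomp Require Import complex.
Set Implicit Arguments. Unset Strict Implicit. Unset Printing Implicit Defensive.
Import Order.TTheory GRing.Theory Num.Theory.
Local Open Scope ring_scope.

Section QState.
Variable R : rcfType.
Local Notation algC := (R[i]).

Definition adjmx (m k : nat) (M : 'M[algC]_(m, k)) : 'M[algC]_(k, m) :=
  (map_mx (fun x => x^*) M)^T.

Definition unitary (m : nat) (U : 'M[algC]_m) : Prop := adjmx U *m U = 1%:M.

Definition eigs2 (M : 'M[algC]_2) : seq algC :=
  sval (closed_field_poly_normal (char_poly M)).

Definition lam_min (M : 'M[algC]_2) : algC :=
  Num.min (eigs2 M)`_0 (eigs2 M)`_1.

(* a two-qubit pure state phi = sum_{ij} Phi i j |i>_A |j>_B, given by its
   coefficient matrix Phi; its reduced state Tr_B |phi><phi| = Phi Phi^dagger *)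
Definition redA2 (Phi : 'M[algC]_2) : 'M[algC]_2 := Phi *m adjmx Phi.

(* E_2(|phi>) = 2 * (smaller squared Schmidt coefficient)
   = 2 * (smaller eigenvalue of the reduced density matrix) *)
Definition E2 (Phi : 'M[algC]_2) : algC := 2 * lam_min (redA2 Phi).

(* three-party state |psi>_{ABS} = sum psi i j l |i>_A |j>_B |l>_S *)
Definition tstate (n : nat) := 'I_2 -> 'I_2 -> 'I_n -> algC.

Definition normalized3 n (psi : tstate n) : Prop :=
  \sum_(i < 2) \sum_(j < 2) \sum_(l < n) `|psi i j l| ^+ 2 = 1.

Definition normalized2 (Phi : 'M[algC]_2) : Prop :=
  \sum_(i < 2) \sum_(j < 2) `|Phi i j| ^+ 2 = 1.

Definition rhoA n (psi : tstate n) : 'M[algC]_2 :=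
  \matrix_(i, i') \sum_(j < 2) \sum_(l < n) psi i j l * (psi i' j l)^*.
Definition rhoB n (psi : tstate n) : 'M[algC]_2 :=
  \matrix_(j, j') \sum_(i < 2) \sum_(l < n) psi i j l * (psi i j' l)^*.

Definition eigenvalues2 (M : 'M[algC]_2) (x0 x1 : algC) : Prop :=
  char_poly M = ('X - x0%:P) * ('X - x1%:P) /\ x1 <= x0.

(* coefficients of psi in the orthonormal bases given by the columns of
   unitaries UA, UB, US:  <i|_A <j|_B <l|_S psi> *)
Definition coef n (UA UB : 'M[algC]_2) (US : 'M[algC]_n) (psi : tstate n)
  (i j : 'I_2) (l : 'I_n) : algC :=
  \sum_(a < 2) \sum_(b < 2) \sum_(c < n)
    (UA a i)^* * (UB b j)^* * (US c l)^* * psi a b c.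

Definition Amat n UA UB US (psi : tstate n) (l : 'I_n) : 'M[algC]_2 :=
  \matrix_(i, j) coef UA UB US psi i j l.

Definition diag2 (x y : algC) : 'M[algC]_2 :=
  \matrix_(i, j) (if i == j then (if i == ord0 then x else y) else 0).

(* class A; p0 >= p1 eigenvalues of rho_A, q0 >= q1 eigenvalues of rho_B *)
Definition classA n (psi : tstate n) (p0 p1 q0 q1 : algC) : Prop :=
  (2 * q1 <= 2 * p1 /\
   exists (UA UB : 'M[algC]_2) (US : 'M[algC]_n) (q0l q1l : 'I_n -> algC),
     unitary UA /\ unitary UB /\ unitary US /\
         (forall l, adjmx (Amat UA UB US psi l) *m Amat UA UB US psi l
                   = diag2 (q0l l) (q1l l)) /\
         (forall l, q1l l <= q0l l) /\
         \sum_(l < n) q0l l = q0 /\ \sum_(l < n) q1l l = q1)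
  \/
  (2 * p1 <= 2 * q1 /\
   exists (UA UB : 'M[algC]_2) (US : 'M[algC]_n) (p0l p1l : 'I_n -> algC),
     unitary UA /\ unitary UB /\ unitary US /\
         (forall l, Amat UA UB US psi l *m adjmx (Amat UA UB US psi l)
                   = diag2 (p0l l) (p1l l)) /\
         (forall l, p1l l <= p0l l) /\
         \sum_(l < n) p0l l = p0 /\ \sum_(l < n) p1l l = p1).

Definition is_decomp n (psi : tstate n) (k : nat) (p : 'I_k -> algC)
  (phi : 'I_k -> 'M[algC]_2) : Prop :=
  [/\ forall t, 0 <= p t,
      \sum_(t < k) p t = 1,
      forall t, normalized2 (phi t) &
      forall (a b a' b' : 'I_2),
        \sum_(t < k) p t * phi t a b * (phi t a' b')^*
        = \sum_(l < n) psi a b l * (psi a' b' l)^*].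

Definition decomp_value (k : nat) (p : 'I_k -> algC) (phi : 'I_k -> 'M[algC]_2)
  : algC := \sum_(t < k) p t * E2 (phi t).

Definition Pm_is n (psi : tstate n) (x : algC) : Prop :=
  (exists (k : nat) (p : 'I_k -> algC) (phi : 'I_k -> 'M[algC]_2), is_decomp psi p phi /\ decomp_value p phi = x) /\
  (forall (k : nat) (p : 'I_k -> algC) (phi : 'I_k -> 'M[algC]_2), is_decomp psi p phi -> decomp_value p phi <= x).

End QState.

(* Main.v *)
Require Import Defs.
From HB Require Import structures.
From mathcomp Require Import all_boot all_order all_algebra all_field.
From mathcomp Require Import complex.
From mathcomp Require Import ring lra.
Import Order.TTheory GRing.Theory Num.Theory.
Local Open Scope ring_scope.
Set Implicit Arguments. Unset Strict Implicit. Unset Printing Implicit Defensive.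

Section Gen.
Variable F : comNzRingType.

Lemma det2 (A : 'M[F]_2) : \det A = A 0 0 * A 1 1 - A 0 1 * A 1 0.
Proof.
rewrite (expand_det_row _ 0) !big_ord_recl big_ord0 addr0 /cofactor /=.
rewrite !det_mx11 !mxE /=.
have -> : lift 0 0 = 1 :> 'I_2 by apply: val_inj.
have -> : lift 1 0 = 0 :> 'I_2 by apply: val_inj.
have -> : ord0 = 0 :> 'I_2 by apply: val_inj.
rewrite /= expr0 expr1 !mul1r mulN1r; ring.
Qed.

Lemma tr2 (A : 'M[F]_2) : \tr A = A 0 0 + A 1 1.
Proof.
rewrite /mxtrace !big_ord_recl big_ord0 addr0.
have -> : lift 0 0 = 1 :> 'I_2 by apply: val_inj.
by have -> : ord0 = 0 :> 'I_2 by apply: val_inj.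
Qed.

Lemma char2 (A : 'M[F]_2) : char_poly A = 'X^2 - (\tr A) *: 'X + (\det A)%:P.
Proof.
apply/polyP => i.
rewrite coefD coefB coefZ coefC coefX coefXn.
case: i => [|[|[|i]]] /=.
- by rewrite char_poly_det expr2 mulrNN !mul1r mulr0 subr0 add0r.
- by rewrite (char_poly_trace A) // mulr1 add0r addr0.
- have := char_poly_monic A; rewrite monicE /lead_coef size_char_poly /= => /eqP ->.
  by rewrite mulr0 subr0 addr0.
- rewrite mulr0 subr0 addr0; apply: nth_default; by rewrite size_char_poly.
Qed.

Lemma poly2 (a b t d : F) : ('X - a%:P)*('X - b%:P) = 'X^2 - t*:'X + d%:P -> a + b = t /\ a*b = d.
Proof.
move=> E.
have E1 : (('X - a%:P)*('X - b%:P))`_1 = ('X^2 - t*:'X + d%:P)`_1 by rewrite E.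
have E0 : (('X - a%:P)*('X - b%:P))`_0 = ('X^2 - t*:'X + d%:P)`_0 by rewrite E.
move: E1 E0.
rewrite !coefM !big_ord_recl big_ord0 !coefD !coefN !coefZ !coefC !coefX !coefXn /=.
rewrite big_ord0 => E1 E0; split.
  have -> : t = - (0 - t * 1 + 0) by ring.
  by rewrite -E1; ring.
have -> : d = 0 - t * 0 + d by ring.
by rewrite -E0; ring.
Qed.
End Gen.

Section C.
Variable R : rcfType.
Local Notation C := (R[i]).

Lemma eigs2P (M : 'M[C]_2) : exists s0 s1, eigs2 M = [:: s0; s1] /\
  ('X - s0%:P) * ('X - s1%:P) = char_poly M.
Proof.
rewrite /eigs2; case: closed_field_poly_normal => s /= Hs.
have lc : lead_coef (char_poly M) = 1 by apply/eqP; rewrite -monicE char_poly_monic.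
rewrite lc scale1r in Hs.
have := size_char_poly M; rewrite Hs size_prod_XsubC.
case: s Hs => [|s0 [|s1 [|? ?]]] Hs //= _.
exists s0, s1; split=> //.
by rewrite !big_cons big_nil mulr1.
Qed.

Lemma eigs2_spec (M : 'M[C]_2) : exists s0 s1, eigs2 M = [:: s0; s1] /\
  s0 + s1 = \tr M /\ s0 * s1 = \det M.
Proof.
have [s0 [s1 [E H]]] := eigs2P M.
exists s0, s1; split=> //; apply: poly2; by rewrite H char2.
Qed.
End C.

Section S.
Variable C : numClosedFieldType.

Lemma min_le (x y : C) : x <= y -> Num.min x y = x.
Proof.
move=> h; rewrite /Order.min; case: ifP => // /negbT.
by rewrite lt_neqAle h andbT negbK => /eqP.
Qed.

Lemma min_ge (x y : C) : y <= x -> Num.min x y = y.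
Proof.
move=> h; rewrite /Order.min; case: ifP => // hl.
by have := lt_le_trans hl h; rewrite ltxx.
Qed.

Definition qf4 (a b b' c v0 v1 : C) :=
  v0^* * a * v0 + v0^* * b * v1 + v1^* * b' * v0 + v1^* * c * v1.
Definition nv (v0 v1 : C) := v0 * v0^* + v1 * v1^*.

Lemma real_sum_prod_ge0 (a c : C) : a \is Num.real -> c \is Num.real ->
  0 <= a + c -> 0 <= a * c -> 0 <= a /\ 0 <= c.
Proof.
move=> Ra Rc hs hp.
have ha : 0 <= a.
  case Ha: (0 <= a) => //.
  have ha' : a < 0 by rewrite real_ltNge ?Ha // real0.
  move: hp; rewrite nmulr_rge0 // => hc.
  have := ltr_leD ha' hc; rewrite addr0 => h.
  by have := lt_le_trans h hs; rewrite ltxx.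
have hc : 0 <= c.
  case Hc: (0 <= c) => //.
  have hc' : c < 0 by rewrite real_ltNge ?Hc // real0.
  move: hp; rewrite mulrC nmulr_rge0 // => hc2.
  have := ltr_leD hc' hc2; rewrite addr0 addrC => h.
  by have := lt_le_trans h hs; rewrite ltxx.
by [].
Qed.

Lemma qf_lb (m00 m11 b x y v0 v1 : C) :
  m00 \is Num.real -> m11 \is Num.real -> x \is Num.real -> y \is Num.real -> x <= y ->
  x + y = m00 + m11 -> x * y = m00 * m11 - b * b^* ->
  x * nv v0 v1 <= qf4 m00 b b^* m11 v0 v1.
Proof.
move=> R0 R1 Rx Ry hxy hs hp.
set a := m00 - x; set c := m11 - x.
have hac : a * c = b * b^*.
  apply/eqP; rewrite -subr_eq0.
  have -> : a * c - b * b^* = (m00 * m11 - b * b^* - x * y) + x * (x + y - (m00 + m11)).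
    by rewrite /a /c; ring.
  by rewrite hs hp !subrr mulr0 addr0.
have Ra : a \is Num.real by rewrite rpredB.
have Rc : c \is Num.real by rewrite rpredB.
have [ha hc] : 0 <= a /\ 0 <= c.
  apply: real_sum_prod_ge0 => //; last by rewrite hac mul_conjC_ge0.
  have -> : a + c = y - x.
    apply/eqP; rewrite -subr_eq0.
    have -> : a + c - (y - x) = (m00 + m11) - (x + y) by rewrite /a /c; ring.
    by rewrite hs subrr.
  by rewrite subr_ge0.
rewrite -subr_ge0.
have -> : qf4 m00 b b^* m11 v0 v1 - x * nv v0 v1 = qf4 a b b^* c v0 v1.
  by rewrite /qf4 /nv /a /c; ring.
have ac : a^* = a by apply/eqP; rewrite -CrealE.
have key : a * qf4 a b b^* c v0 v1 = (a * v0 + b * v1) * (a * v0 + b * v1)^*.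
  rewrite rmorphD !rmorphM /= ac.
  have -> : a * qf4 a b b^* c v0 v1 = a * a * v0^* * v0 + a * b * v0^* * v1
     + a * b^* * v1^* * v0 + (a * c) * v1^* * v1 by rewrite /qf4; ring.
  rewrite hac; ring.
have [a0|an0] := eqVneq a 0.
  move: hac; rewrite a0 mul0r => /esym /eqP; rewrite mul_conjC_eq0 => /eqP b0.
  rewrite /qf4 b0 conjC0 !mulr0 !mul0r !add0r.
  by rewrite mulrC mulrA; apply: mulr_ge0 => //; exact: mul_conjC_ge0.
have apos : 0 < a by rewrite lt_def an0 ha.
by rewrite -(pmulr_rge0 _ apos) key mul_conjC_ge0.
Qed.

Lemma eigvec (r00 r11 b p : C) : r00 \is Num.real -> p \is Num.real ->
  (r00 - p) * (r11 - p) = b * b^* ->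
  exists v0 v1, 0 < nv v0 v1 /\ qf4 r00 b b^* r11 v0 v1 = p * nv v0 v1.
Proof.
move=> R0 Rp h.
set a := r00 - p.
have ac : a^* = a by apply/eqP; rewrite -CrealE rpredB.
have [ab0 | nab] := boolP ((a == 0) && (b == 0)).
  move: ab0; case/andP => /eqP a0 /eqP b0.
  exists 1, 0; rewrite /nv /qf4 b0 conjC0 conjC1 !mulr0 !mul0r !addr0 !mulr1 !mul1r.
  split; first exact: ltr01.
  by apply/eqP; rewrite -subr_eq0 -/a a0.
exists (- b), a; split.
  rewrite /nv rmorphN mulrNN.
  have h1 := mul_conjC_ge0 b; have h2 := mul_conjC_ge0 a.
  rewrite lt_def addr_ge0 // andbT paddr_eq0 // !mul_conjC_eq0.
  by rewrite andbC.

apply/eqP; rewrite -subr_eq0.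
have -> : qf4 r00 b b^* r11 (- b) a - p * nv (- b) a = a * ((r00 - p) * (r11 - p) - b * b^*).
  by rewrite /qf4 /nv rmorphN ac /a; ring.
by rewrite h subrr mulr0.
Qed.
End S.

Section C.
Variable R : rcfType.
Local Notation C := (R[i]).

Lemma redA2E (Phi : 'M[C]_2) i i' : redA2 Phi i i' = \sum_j Phi i j * (Phi i' j)^*.
Proof. by rewrite !mxE; apply: eq_bigr => j _; rewrite !mxE. Qed.

Lemma redA2_herm (Phi : 'M[C]_2) i i' : (redA2 Phi i i')^* = redA2 Phi i' i.
Proof.
rewrite !redA2E rmorph_sum; apply: eq_bigr => j _.
by rewrite rmorphM /= conjCK mulrC.
Qed.

Lemma redA2_real (Phi : 'M[C]_2) i : redA2 Phi i i \is Num.real.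
Proof. by rewrite CrealE redA2_herm. Qed.

Lemma two_real : (2 : C) \is Num.real.
Proof. by rewrite realn. Qed.

Lemma roots_real (m00 m11 b s0 s1 : C) : m00 \is Num.real -> m11 \is Num.real ->
  s0 + s1 = m00 + m11 -> s0 * s1 = m00 * m11 - b * b^* ->
  s0 \is Num.real /\ s1 \is Num.real.
Proof.
move=> R0 R1 hs hp.
have hd : (s0 - s1) ^+ 2 = (m00 - m11) ^+ 2 + 4 * (b * b^*).
  have -> : (s0 - s1) ^+ 2 = (s0 + s1) ^+ 2 - 4 * (s0 * s1) by ring.
  rewrite hs hp; ring.
have Rd : s0 - s1 \is Num.real.
  rewrite realEsqr hd addr_ge0 //; first by rewrite -realEsqr rpredB.
  by rewrite mulr_ge0 ?ler0n ?mul_conjC_ge0.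
have Rs : s0 + s1 \is Num.real by rewrite hs rpredD.
have e0 : s0 = ((s0 + s1) + (s0 - s1)) / 2.
  by field.
have e1 : s1 = ((s0 + s1) - (s0 - s1)) / 2.
  by field.
split; [rewrite e0; apply: rpredM; first exact: rpredD | rewrite e1; apply: rpredM; first exact: rpredB]; by rewrite rpredV two_real.
Qed.

Lemma lam_qf (Phi : 'M[C]_2) v0 v1 :
  lam_min (redA2 Phi) * nv v0 v1 <=
  qf4 (redA2 Phi 0 0) (redA2 Phi 0 1) (redA2 Phi 1 0) (redA2 Phi 1 1) v0 v1.
Proof.
set M := redA2 Phi.
have h10 : M 1 0 = (M 0 1)^* by rewrite /M redA2_herm.
have R0 : M 0 0 \is Num.real by apply: redA2_real.
have R1 : M 1 1 \is Num.real by apply: redA2_real.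
have [s0 [s1 [E [hs hp]]]] := eigs2_spec M.
rewrite tr2 in hs; rewrite det2 h10 in hp.
have [Rs0 Rs1] := roots_real R0 R1 hs hp.
rewrite /lam_min E /= h10.
case/orP: (real_leVge Rs0 Rs1) => hle.
  rewrite min_le //; exact: (@qf_lb C _ _ _ _ s1).
rewrite min_ge //; apply: (@qf_lb C _ _ _ _ s0) => //; [by rewrite addrC hs | by rewrite mulrC hp].
Qed.
End C.

Lemma sum2g (F : nmodType) (f : 'I_2 -> F) : \sum_(j < 2) f j = f 0 + f 1.
Proof.
rewrite !big_ord_recl big_ord0 addr0.
have -> : lift 0 0 = 1 :> 'I_2 by apply: val_inj.
by have -> : ord0 = 0 :> 'I_2 by apply: val_inj.
Qed.

Lemma det_gen (C : numClosedFieldType) (Phi : 'M[C]_2) :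
  \det (Phi^T *m (map_mx (fun x => x^*) Phi^T)^T) = \det (Phi *m (map_mx (fun x => x^*) Phi)^T).
Proof.
rewrite !det2 !mxE !sum2g !mxE.
ring.
Qed.

Section C.
Variable R : rcfType.
Local Notation C := (R[i]).

Lemma sum2 (f : 'I_2 -> C) : \sum_(j < 2) f j = f 0 + f 1.
Proof.
rewrite !big_ord_recl big_ord0 addr0.
have -> : lift 0 0 = 1 :> 'I_2 by apply: val_inj.
by have -> : ord0 = 0 :> 'I_2 by apply: val_inj.
Qed.

Lemma eigs2_eq (A B : 'M[C]_2) : char_poly A = char_poly B -> eigs2 A = eigs2 B.
Proof. by rewrite /eigs2 => ->. Qed.

Lemma tr_redA2_tr (Phi : 'M[C]_2) : \tr (redA2 Phi^T) = \tr (redA2 Phi).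
Proof.
rewrite !tr2 !redA2E !sum2.
rewrite !mxE.
ring.
Qed.

Lemma det_redA2_tr (Phi : 'M[C]_2) : \det (redA2 Phi^T) = \det (redA2 Phi).
Proof. exact: det_gen. Qed.

Lemma lam_min_tr (Phi : 'M[C]_2) : lam_min (redA2 Phi^T) = lam_min (redA2 Phi).
Proof.
have E : char_poly (redA2 Phi^T) = char_poly (redA2 Phi).
  by rewrite char2 tr_redA2_tr det_redA2_tr char2.
rewrite /lam_min /eigs2 E.
reflexivity.
Qed.
End C.

Lemma qf4_sum (C : numClosedFieldType) k (p a b c d : 'I_k -> C) v0 v1 :
  qf4 (\sum_t p t * a t) (\sum_t p t * b t) (\sum_t p t * c t) (\sum_t p t * d t) v0 v1
  = \sum_t p t * qf4 (a t) (b t) (c t) (d t) v0 v1.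
Proof.
rewrite /qf4 !mulr_sumr !mulr_suml -!big_split /=; apply: eq_bigr => t _; ring.
Qed.

Lemma cond_gen (C : numClosedFieldType) (r00 r11 b x0 x1 : C) :
  x0 + x1 = r00 + r11 -> x0 * x1 = r00 * r11 - b * b^* ->
  (r00 - x1) * (r11 - x1) = b * b^*.
Proof.
move=> hs hp; apply/eqP; rewrite -subr_eq0.
have -> : (r00 - x1) * (r11 - x1) - b * b^* =
   (r00 * r11 - b * b^* - x0 * x1) + x1 * (x0 + x1 - (r00 + r11)) by ring.
by rewrite hs hp !subrr mulr0 addr0.
Qed.

Lemma real_x1 (C : numClosedFieldType) (x0 x1 : C) : x0 + x1 \is Num.real -> x1 <= x0 ->
  x1 \is Num.real.
Proof.
move=> Rs hle.
have Rd : x0 - x1 \is Num.real by apply: ger0_real; rewrite subr_ge0.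
have -> : x1 = ((x0 + x1) - (x0 - x1)) / 2 by field.
apply: rpredM; [exact: rpredB | by rewrite rpredV realn].
Qed.

Section C.
Variable R : rcfType.
Local Notation C := (R[i]).

Lemma ub_gen k (p : 'I_k -> C) (Phi : 'I_k -> 'M[C]_2) (rho : 'M[C]_2) x0 x1 :
  (forall t, 0 <= p t) ->
  (forall i i', rho i i' = \sum_t p t * redA2 (Phi t) i i') ->
  eigenvalues2 rho x0 x1 ->
  \sum_t p t * lam_min (redA2 (Phi t)) <= x1.
Proof.
move=> p0 hrho [hc hle].
have pc : forall t, (p t)^* = p t.
  by move=> t; apply/eqP; rewrite -CrealE; apply: ger0_real.
have herm : forall i i', (rho i i')^* = rho i' i.
  move=> i i'; rewrite !hrho rmorph_sum; apply: eq_bigr => t _.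
  by rewrite rmorphM /= pc redA2_herm.
have Rd : forall i, rho i i \is Num.real by move=> i; rewrite CrealE herm.
have [hs hp] : x0 + x1 = \tr rho /\ x0 * x1 = \det rho.
  by apply: poly2; rewrite -hc char2.
rewrite tr2 in hs; rewrite det2 -(herm 0 1) in hp.
have Rx1 : x1 \is Num.real by apply: (real_x1 (x0 := x0)); rewrite // hs rpredD.
have hcond := cond_gen hs hp.
have [v0 [v1 [nvpos hq]]] := eigvec (Rd 0) Rx1 hcond.
rewrite herm in hq.
rewrite -(ler_pM2r nvpos) -hq.
rewrite (hrho 0 0) (hrho 0 1) (hrho 1 0) (hrho 1 1) qf4_sum mulr_suml.
apply: ler_sum => t _.
rewrite -mulrA; apply: ler_wpM2l => //.
exact: lam_qf.
Qed.
End C.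

Lemma roots_pair (F : idomainType) (a b x y : F) : a + b = x + y -> a * b = x * y ->
  (a = x /\ b = y) \/ (a = y /\ b = x).
Proof.
move=> hs hp.
have : (a - x) * (a - y) == 0.
  have -> : (a - x) * (a - y) = a * (a + b - (x + y)) - (a * b - x * y) by ring.
  by rewrite hs hp !subrr mulr0 subrr.
rewrite mulf_eq0 => /orP [] /eqP /subr0_eq ha.
  left; split => //; apply: (addrI a); rewrite hs ha //.
right; split => //; apply: (addrI a); by rewrite hs ha addrC.
Qed.

Lemma cp_swap (F : comNzRingType) (X Y : 'M[F]_2) : char_poly (X *m Y) = char_poly (Y *m X).
Proof. by rewrite !char2 mxtrace_mulC !det_mulmx mulrC. Qed.

Section G.
Variable C : numClosedFieldType.
Definition adj (m k : nat) (M : 'M[C]_(m, k)) : 'M[C]_(k, m) := (map_mx (fun x => x^*) M)^T.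

Lemma adjM m k l (X : 'M[C]_(m, k)) (Y : 'M[C]_(k, l)) : adj (X *m Y) = adj Y *m adj X.
Proof.
apply/matrixP => i j; rewrite !mxE rmorph_sum; apply: eq_bigr => t _.
by rewrite !mxE rmorphM mulrC.
Qed.

Lemma adjK m k (X : 'M[C]_(m, k)) : adj (adj X) = X.
Proof. by apply/matrixP => i j; rewrite !mxE conjCK. Qed.

Lemma cp_conj (U M : 'M[C]_2) : adj U *m U = 1%:M ->
  char_poly (U *m M *m adj U) = char_poly M.
Proof.
move=> hU; rewrite cp_swap mulmxA hU mul1mx //.
Qed.

Lemma uu_row n (U : 'M[C]_n) : adj U *m U = 1%:M ->
  forall a a', \sum_i U a i * (U a' i)^* = (a == a')%:R.
Proof.
move=> hU a a'; have := mulmx1C hU => /matrixP /(_ a a').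
rewrite !mxE => <-; apply: eq_bigr => i _; by rewrite !mxE.
Qed.
End G.

Section C.
Variable R : rcfType.
Local Notation C := (R[i]).

Lemma redA2Z (c : C) (w : 'M[C]_2) : redA2 (c *: w) = (c * c^*) *: redA2 w.
Proof.
apply/matrixP => i j; rewrite redA2E [RHS]mxE redA2E mulr_sumr; apply: eq_bigr => t _.
rewrite !mxE rmorphM /=; ring.
Qed.

Lemma lam_of (M : 'M[C]_2) x y : x + y = \tr M -> x * y = \det M -> y <= x -> lam_min M = y.
Proof.
move=> hs hp hle.
have [s0 [s1 [E [h0 h1]]]] := eigs2_spec M.
rewrite /lam_min E /=.
have [[e0 e1]|[e0 e1]] := roots_pair (etrans h0 (esym hs)) (etrans h1 (esym hp)).
  by rewrite e0 e1 min_ge.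
by rewrite e0 e1 min_le.
Qed.

Lemma tr_redA2 (w : 'M[C]_2) : \tr (redA2 w) = \sum_a \sum_b w a b * (w a b)^*.
Proof. by rewrite /mxtrace; apply: eq_bigr => a _; rewrite redA2E. Qed.

Lemma N_ge0 (w : 'M[C]_2) : 0 <= \tr (redA2 w).
Proof.
rewrite tr_redA2; apply: sumr_ge0 => a _; apply: sumr_ge0 => b _; exact: mul_conjC_ge0.
Qed.

Lemma N_eq0 (w : 'M[C]_2) : \tr (redA2 w) = 0 -> forall a b, w a b = 0.
Proof.
rewrite tr_redA2 => /eqP; rewrite psumr_eq0; last first.
  by move=> a _; apply: sumr_ge0 => b _; exact: mul_conjC_ge0.
move=> /allP H a b.
have := H a (mem_index_enum a) => /=; rewrite psumr_eq0; last first.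
  by move=> b' _; exact: mul_conjC_ge0.
move=> /allP /(_ b (mem_index_enum b)) /=.
by rewrite mul_conjC_eq0 => /eqP.
Qed.
End C.

Section C.
Variable R : rcfType.
Local Notation C := (R[i]).

Lemma unitary_r n (U : 'M[C]_n) : unitary U -> U *m adjmx U = 1%:M.
Proof. by move=> hU; apply: mulmx1C. Qed.

Lemma unitary_T n (U : 'M[C]_n) : unitary U -> map_mx (fun x => x^*) U *m U^T = 1%:M.
Proof.
move=> hU; have := unitary_r hU => /(congr1 trmx).
by rewrite trmx_mul trmx1 /adjmx trmxK.
Qed.

Lemma adjmx_mul m k l (X : 'M[C]_(m, k)) (Y : 'M[C]_(k, l)) : adjmx (X *m Y) = adjmx Y *m adjmx X.
Proof.
apply/matrixP => i j; rewrite !mxE rmorph_sum; apply: eq_bigr => t _.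
by rewrite !mxE rmorphM mulrC.
Qed.

Lemma adjmx_tr n (X : 'M[C]_n) : adjmx X^T = map_mx (fun x => x^*) X.
Proof. by apply/matrixP => i j; rewrite !mxE. Qed.

Definition Qm n (US : 'M[C]_n) (psi : tstate R n) (l : 'I_n) : 'M[C]_2 :=
  \matrix_(a, b) \sum_c (US c l)^* * psi a b c.

Lemma Amat_Q n (UA UB : 'M[C]_2) (US : 'M[C]_n) psi l :
  Amat UA UB US psi l = adjmx UA *m Qm US psi l *m map_mx (fun x => x^*) UB.
Proof.
apply/matrixP => i j; rewrite !mxE /coef.
under [RHS]eq_bigr => b _ do rewrite !mxE big_distrl /=.
rewrite [RHS]exchange_big /=; apply: eq_bigr => a _; apply: eq_bigr => b _.
rewrite !mxE mulr_sumr mulr_suml; apply: eq_bigr => c _.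
ring.
Qed.

Lemma Q_eq n (UA UB : 'M[C]_2) (US : 'M[C]_n) psi l : unitary UA -> unitary UB ->
  UA *m Amat UA UB US psi l *m UB^T = Qm US psi l.
Proof.
move=> hA hB; rewrite Amat_Q !mulmxA (unitary_r hA) mul1mx -mulmxA (unitary_T hB) mulmx1.
by [].
Qed.
End C.

Section C.
Variable R : rcfType.
Local Notation C := (R[i]).

Lemma uu n (U : 'M[C]_n) : unitary U -> forall c c', \sum_l U c' l * (U c l)^* = (c' == c)%:R.
Proof.
move=> hU c c'; have := unitary_r hU => /matrixP /(_ c' c).
rewrite !mxE => <-; apply: eq_bigr => i _; by rewrite !mxE.
Qed.

Lemma unitary_T2 n (U : 'M[C]_n) : unitary U -> U^T *m map_mx (fun x => x^*) U = 1%:M.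
Proof.
move=> hU; have := hU => /(congr1 trmx).
by rewrite trmx_mul trmx1 /adjmx trmxK.
Qed.

Lemma W1 n (US : 'M[C]_n) psi a b a' b' : unitary US ->
  \sum_l Qm US psi l a b * (Qm US psi l a' b')^* = \sum_l psi a b l * (psi a' b' l)^*.
Proof.
move=> hU.
transitivity (\sum_l \sum_c \sum_c' (psi a b c * (psi a' b' c')^*) * (US c' l * (US c l)^*)).
  apply: eq_bigr => l _; rewrite !mxE rmorph_sum mulr_suml; apply: eq_bigr => c _.
  rewrite mulr_sumr; apply: eq_bigr => c' _; rewrite rmorphM /= conjCK; ring.
rewrite exchange_big /=.
under eq_bigr => c _ do rewrite exchange_big /=.
apply: eq_bigr => c _.
under eq_bigr => c' _ do rewrite -mulr_sumr (uu hU) mulr_natr mulrb.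
rewrite -big_mkcond /= big_pred1_eq //.
Qed.

Lemma trdet_Q n (UA UB : 'M[C]_2) (US : 'M[C]_n) psi l : unitary UA -> unitary UB ->
  \tr (redA2 (Qm US psi l)) = \tr (Amat UA UB US psi l *m adjmx (Amat UA UB US psi l)) /\
  \det (redA2 (Qm US psi l)) = \det (Amat UA UB US psi l *m adjmx (Amat UA UB US psi l)).
Proof.
move=> hA hB; rewrite -(Q_eq US psi l hA hB).
set A := Amat UA UB US psi l.
have E : redA2 (UA *m A *m UB^T) = UA *m (A *m adjmx A) *m adjmx UA.
  rewrite /redA2 !adjmx_mul adjmx_tr.
  rewrite !mulmxA -(mulmxA _ UB^T) (unitary_T2 hB) mulmx1 //.
rewrite E; split.
  by rewrite mxtrace_mulC !mulmxA hA mul1mx.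
have h1 : \det (adjmx UA) * \det UA = 1 by rewrite -det_mulmx hA det1.
rewrite !det_mulmx mulrC !mulrA h1 mul1r //.
Qed.
End C.

Section C.
Variable R : rcfType.
Local Notation C := (R[i]).

Lemma attain n (psi : tstate R n) (US : 'M[C]_n) (x y : 'I_n -> C) :
  unitary US -> normalized3 psi ->
  (forall l, \tr (redA2 (Qm US psi l)) = x l + y l) ->
  (forall l, \det (redA2 (Qm US psi l)) = x l * y l) ->
  (forall l, y l <= x l) ->
  exists k (p : 'I_k -> C) (phi : 'I_k -> 'M[C]_2),
    is_decomp psi p phi /\ decomp_value p phi = 2 * \sum_l y l.
Proof.
move=> hU hpsi htr hdet hle.
set Q := Qm US psi.
pose N l := \tr (redA2 (Q l)).
pose phi l := if N l == 0 then (delta_mx 0 0 : 'M[C]_2) else (sqrtC (N l))^-1 *: Q l.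
have key : forall l a b a' b', N l * phi l a b * (phi l a' b')^* = Q l a b * (Q l a' b')^*.
  move=> l a b a' b'; rewrite /phi; case: eqP => hN.
    by rewrite hN !mul0r (N_eq0 hN a b) mul0r.
  set s := sqrtC (N l).
  have Ns : N l = s ^+ 2 by rewrite sqrtCK.
  have s0 : s != 0 by rewrite sqrtC_eq0; apply/eqP.
  have sc : s^* = s.
    by apply/eqP; rewrite -CrealE; apply: ger0_real; rewrite sqrtC_ge0 N_ge0.
  rewrite !mxE rmorphM fmorphV /= sc Ns.
  by field.
have N0 : forall l, 0 <= N l by move=> l; apply: N_ge0.
have sumN : \sum_l N l = 1.
  rewrite -hpsi.
  transitivity (\sum_l \sum_a \sum_b Q l a b * (Q l a b)^*).
    by apply: eq_bigr => l _; rewrite /N tr_redA2.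
  rewrite exchange_big /=; apply: eq_bigr => a _.
  rewrite exchange_big /=; apply: eq_bigr => b _.
  rewrite (W1 psi a b a b hU); apply: eq_bigr => l _; by rewrite normCK.
exists n, N, phi; split; last first.
  rewrite /decomp_value mulr_sumr; apply: eq_bigr => l _.
  rewrite /phi; case: eqP => hN.
    rewrite hN mul0r.
    have Q0 := N_eq0 hN.
    have hs : x l + y l = 0 by rewrite -htr.
    have hp : x l * y l = 0.
      by rewrite -hdet det2 !redA2E !sum2 !Q0 !mul0r !addr0 !mul0r subrr.
    have : y l ^+ 2 == 0.
      have -> : y l ^+ 2 = (x l + y l) * y l - x l * y l by ring.
      by rewrite hp hs mul0r subrr.
    by rewrite expf_eq0 /= => /eqP ->; rewrite mulr0.
  set s := sqrtC (N l).
  have Ns : N l = s ^+ 2 by rewrite sqrtCK.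
  have s0 : s != 0 by rewrite sqrtC_eq0; apply/eqP.
  have sc : s^* = s.
    by apply/eqP; rewrite -CrealE; apply: ger0_real; rewrite sqrtC_ge0 N_ge0.
  have Npos : 0 < N l by rewrite lt_def N_ge0 andbT; apply/eqP.
  have cc : s^-1 * (s^-1)^* = (N l)^-1 by rewrite fmorphV /= sc Ns -invfM expr2.
  rewrite /E2 redA2Z cc (@lam_of _ _ (x l / N l) (y l / N l)).
  - by field; apply/eqP.
  - have trN : N l = x l + y l := htr l.
    by rewrite mxtraceZ -/(N l) -mulrDl -trN mulrC.
  - have dN : \det (redA2 (Q l)) = x l * y l := hdet l.
    by rewrite detZ dN; field; apply/eqP.
  - by rewrite ler_pM2r ?invr_gt0.
split => //.
- move=> l; rewrite /normalized2.
  transitivity (\sum_i \sum_j phi l i j * (phi l i j)^*).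
    by apply: eq_bigr => i _; apply: eq_bigr => j _; rewrite normCK.
  case: (eqVneq (N l) 0) => hN.
    rewrite /phi hN eqxx !sum2 !mxE /=; rewrite conjC1 conjC0; ring.
  apply: (mulfI hN); rewrite mulr1 mulr_sumr.
  transitivity (\sum_i \sum_j Q l i j * (Q l i j)^*).
    apply: eq_bigr => i _; rewrite mulr_sumr; apply: eq_bigr => j _.
    by rewrite mulrA key.
  by rewrite /N tr_redA2.
- move=> a b a' b'.
  rewrite -(W1 psi a b a' b' hU); apply: eq_bigr => l _; exact: key.
Qed.
End C.

Section C.
Variable R : rcfType.
Local Notation C := (R[i]).

Lemma tr_diag2 (a b : C) : \tr (diag2 a b) = a + b.
Proof. by rewrite tr2 !mxE. Qed.

Lemma det_diag2 (a b : C) : \det (diag2 a b) = a * b.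
Proof. by rewrite det2 !mxE /= mulr0 subr0. Qed.

End C.

Theorem theorem6 (R : rcfType) (n : nat) (hn : (2 <= n)%N) (psi : tstate R n)
  (p0 p1 q0 q1 : R[i])
  (hpsi : normalized3 psi)
  (hA : eigenvalues2 (rhoA psi) p0 p1)
  (hB : eigenvalues2 (rhoB psi) q0 q1)
  (hclass : classA psi p0 p1 q0 q1) :
  Pm_is psi (Num.min (2 * p1) (2 * q1)).
Proof.
split.
  case: hclass => [[hle [UA [UB [US [q0l [q1l [hUA [hUB [hUS [hd [hq [s0 s1]]]]]]]]]]]]
                 | [hle [UA [UB [US [q0l [q1l [hUA [hUB [hUS [hd [hq [s0 s1]]]]]]]]]]]]].
    have [k [p [phi [hdec hval]]]] := attain (x := q0l) (y := q1l) hUS hpsi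
      (fun l => etrans (proj1 (trdet_Q US psi l hUA hUB))
                 (etrans (mxtrace_mulC _ _) (etrans (congr1 mxtrace (hd l)) (tr_diag2 _ _))))
      (fun l => etrans (proj2 (trdet_Q US psi l hUA hUB))
                 (etrans (etrans (det_mulmx _ _) (etrans (mulrC _ _) (esym (det_mulmx _ _))))
                         (etrans (congr1 determinant (hd l)) (det_diag2 _ _)))) hq.
    exists k, p, phi; split => //; by rewrite hval s1 min_ge.
  have [k [p [phi [hdec hval]]]] := attain (x := q0l) (y := q1l) hUS hpsi
    (fun l => etrans (proj1 (trdet_Q US psi l hUA hUB))
               (etrans (congr1 mxtrace (hd l)) (tr_diag2 _ _)))
    (fun l => etrans (proj2 (trdet_Q US psi l hUA hUB))
               (etrans (congr1 determinant (hd l)) (det_diag2 _ _))) hq.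
  exists k, p, phi; split => //; by rewrite hval s1 min_le.
move=> k p phi [hp0 hsum hnorm hdec].
have hA' : forall i i', rhoA psi i i' = \sum_t p t * redA2 (phi t) i i'.
  move=> i i'; rewrite mxE.
  transitivity (\sum_j \sum_t p t * phi t i j * (phi t i' j)^*).
    by apply: eq_bigr => j _; rewrite hdec.
  rewrite exchange_big /=; apply: eq_bigr => t _.
  by rewrite redA2E mulr_sumr; apply: eq_bigr => j _; rewrite mulrA.
have hB' : forall j j', rhoB psi j j' = \sum_t p t * redA2 (phi t)^T j j'.
  move=> j j'; rewrite mxE.
  transitivity (\sum_i \sum_t p t * phi t i j * (phi t i j')^*).
    by apply: eq_bigr => i _; rewrite hdec.
  rewrite exchange_big /=; apply: eq_bigr => t _.
  by rewrite redA2E mulr_sumr; apply: eq_bigr => i _; rewrite !mxE mulrA.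
have ubA := ub_gen hp0 hA' hA.
have ubB := ub_gen hp0 hB' hB.
have ubB2 : \sum_t p t * lam_min (redA2 (phi t)) <= q1.
  by rewrite -(eq_bigr _ (fun t _ => congr1 (fun z => p t * z) (lam_min_tr (phi t)))).
have -> : decomp_value p phi = 2 * \sum_t p t * lam_min (redA2 (phi t)).
  rewrite /decomp_value /E2 mulr_sumr; apply: eq_bigr => t _; by rewrite mulrCA.
case: hclass => [[hle _]|[hle _]].
  by rewrite min_ge // ler_pM2l.
by rewrite min_le // ler_pM2l.
Qed.
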